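(* Fix $p,\epsilon\in(0,1)$ and let $G$ be a graph on $n$ vertices. Let $A$ be the set of paths of length $2$ in $G$ that are not $(p,\epsilon)$-admissible. Then \[\sum_{xyz\in A}\frac1{\deg y}<\frac{3n}{2p^2\epsilon},\] where the sum is over unlabeled paths (each path $xyz=zyx$ counted once) and $\deg y$ is the degree of the middle vertex $y$ in $G$.
   Context: For a graph $G$ and a path $wuw'$ of length $2$ in $G$: choose $U\subseteq V(G)\setminus\{u\}$ by including each vertex other than $u$ independently with probability $p$, and let $A_{wuw'}$ be the event that $G$ contains a path $ww_1\cdots w_{k-1}w'$ of length $k\ge 2$ from $w$ to $w'$ with $w_1,\ldots,w_{k-1}\in U$. The path $wuw'$ is $(p,\epsilon)$-admissible if $\Pr[A_{wuw'}]\ge1-\epsilon$. *)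

(* Defs.v *)
From HB Require Import structures.
From mathcomp Require Import all_boot all_order all_algebra.
From mathcomp Require Import boolp reals.
Set Implicit Arguments. Unset Strict Implicit. Unset Printing Implicit Defensive.
Import Order.TTheory GRing.Theory Num.Theory.
Local Open Scope ring_scope.

Definition simple_graph (T : finType) (e : rel T) : Prop :=
  symmetric e /\ irreflexive e.

Definition deg (T : finType) (e : rel T) (y : T) : nat := #|[set v | e y v]|.

Definition path2 (T : finType) (e : rel T) (x y z : T) : bool :=
  [&& e x y, e y z & x != z].

(* Event A_{w u w'} for a given outcome U: G contains a path
   w w_1 ... w_{k-1} w' of length k >= 2 (vertices pairwise distinct)
   with all internal vertices w_1..w_{k-1} in U.
   The sequence s = [:: w_1; ...; w_{k-1}; w'] has size k. *)
Definition A_event (T : finType) (e : rel T) (U : {set T}) (w w' : T) : Prop :=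
  exists s : seq T,
    [/\ (2 <= size s)%N, path e w s, last w s = w', uniq (w :: s)
      & all (fun v => v \in U) (take (size s).-1 s)].

(* Pr[A_{wuw'}] where U subset of V(G)\{u} contains each vertex other than u
   independently with probability p. *)
Definition prob_A (R : realType) (T : finType) (e : rel T) (p : R) (w u w' : T) : R :=
  \sum_(U : {set T} | u \notin U)
     (p ^+ #|U| * (1 - p) ^+ (#|T| - 1 - #|U|) * (if `[< A_event e U w w' >] then 1 else 0)).

Definition admissible (R : realType) (T : finType) (e : rel T) (p eps : R) (w u w' : T) : Prop :=
  prob_A e p w u w' >= 1 - eps.

(* Sum over unlabeled non-admissible paths xyz of 1/deg y. Each unordered path
   xyz = zyx is counted once by requiring enum_rank x < enum_rank z. *)
Definition nonadm_sum (R : realType) (T : finType) (e : rel T) (p eps : R) : R :=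
  \sum_(t : T * T * T |
        [&& path2 e t.1.1 t.1.2 t.2,
            (enum_rank t.1.1 < enum_rank t.2)%N
          & ~~ `[< admissible e p eps t.1.1 t.1.2 t.2 >]])
     ((deg e t.1.2)%:R)^-1.

(* Main.v *)
Require Import Defs.
From HB Require Import structures.
From mathcomp Require Import all_boot all_order all_algebra.
From mathcomp Require Import boolp reals.
From mathcomp Require Import ring lra.
Set Implicit Arguments. Unset Strict Implicit. Unset Printing Implicit Defensive.
Import Order.TTheory GRing.Theory Num.Theory.

Lemma short_path (T : eqType) (R : rel T) x s : path R x s ->
  exists s', [/\ path R x s', uniq (x :: s'), last x s' = last x s & {subset s' <= s}].
Proof. by move=> H; case: (shortenP H) => s' p u sub; exists s'. Qed.

Lemma join_walk (T : eqType) (R : rel T) a b s1 s2 : symmetric R ->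
  path R a s1 -> path R b s2 -> last a s1 = last b s2 ->
  exists s, path R a s /\ last a s = b.
Proof.
move=> Rs p1 p2 l12.
exists (s1 ++ rev (belast b s2)); rewrite cat_path last_cat p1 /= l12.
split; first by rewrite rev_path; apply: sub_path p2 => u v; rewrite Rs.
case: s2 {p2 l12} => [|c s2] //=.
by rewrite rev_cons last_rcons.
Qed.

Section BFS.
Variables (T : finType) (e : rel T) (W : {set T}).
Hypothesis esym : symmetric e.
Hypothesis eirr : irreflexive e.

Definition eW : rel T := fun a b => [&& e a b, a \in W & b \in W].
Lemma eW_sym : symmetric eW.
Proof. by move=> a b; rewrite /eW esym; case: (a \in W); case: (b \in W); rewrite ?andbF. Qed.

Definition rt a := fingraph.root eW a.
Lemma conn_rt a : connect eW (rt a) a.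
Proof. by rewrite (sym_connect_sym eW_sym) connect_root. Qed.

Definition Ph a k : bool :=
  `[< exists s, size s = k /\ path eW (rt a) s /\ last (rt a) s = a >].
Lemma Ph_ex a : exists k, Ph a k.
Proof.
have /connectP [s ps ls] := conn_rt a.
by exists (size s); apply/asboolP; exists s.
Qed.
Definition h a := ex_minn (Ph_ex a).

Lemma h_spec a : exists s, [/\ size s = h a, path eW (rt a) s & last (rt a) s = a].
Proof.
rewrite /h; case: ex_minnP => m /asboolP [s [? [? ?]]] _; by exists s.
Qed.
Lemma h_min a s : path eW (rt a) s -> last (rt a) s = a -> (h a <= size s)%N.
Proof.
move=> ps ls; rewrite /h; case: ex_minnP => m _ H; apply: H.
by apply/asboolP; exists s.
Qed.

Lemma rt_eq a b : eW a b -> rt a = rt b.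
Proof. by move=> ab; apply/(fingraph.rootP (sym_connect_sym eW_sym))/connect1. Qed.

Lemma h_step a b : eW a b -> (h b <= (h a).+1)%N.
Proof.
move=> ab; have [s [sz ps ls]] := h_spec a.
rewrite -sz -(size_rcons s b); apply: h_min.
  by rewrite -(rt_eq ab) rcons_path ps ls.
by rewrite last_rcons.
Qed.

Lemma h0 a : h a = 0%N -> rt a = a.
Proof.
move=> ha; have [s [sz ps ls]] := h_spec a.
by case: s sz ps ls => [|c s] //=; rewrite ha.
Qed.

Lemma h_par_ex a : (0 < h a)%N -> exists q, eW a q && (h q == (h a).-1).
Proof.
move=> hp; have [s [sz ps ls]] := h_spec a.
case/lastP: s sz ps ls => [|s c]; first by move=> /= sz; rewrite -sz in hp.
rewrite size_rcons rcons_path last_rcons => sz /andP [ps ec] ca; subst c.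
set q := last (rt a) s in ec *.
have rq : rt q = rt a by rewrite (rt_eq ec).
have h1 : (h q <= size s)%N by apply: h_min; rewrite rq.
have h2 := h_step ec.
exists q; rewrite eW_sym ec /=; apply/eqP; rewrite -sz /=; rewrite -sz in h2.
by apply/eqP; rewrite eqn_leq h1 -ltnS.
Qed.

Definition par a := odflt a [pick q | eW a q && (h q == (h a).-1)].
Lemma par_spec a : (0 < h a)%N -> eW a (par a) /\ h (par a) = (h a).-1.
Proof.
move=> hp; rewrite /par; case: pickP => [q /andP [q1 /eqP q2] | none] //=.
by have [q /andP [q1 /eqP q2]] := h_par_ex hp; move: (none q); rewrite q1 q2 eqxx.
Qed.

Definition tpar : rel T := fun u v => (0 < h u)%N && (v == par u).

Lemma up_ex a : exists s, [/\ path tpar a s, last a s = rt a &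
   all (fun v => (h v < h a)%N && ((v == par a) || ((h v).+2 <= h a)%N)) s].
Proof.
move Hn: (h a) => n; elim: n a Hn => [|n IH] a ha.
  by exists [::]; rewrite /= h0.
have hp : (0 < h a)%N by rewrite ha.
have [pa hpa] := par_spec hp.
have e1 : h (par a) = n by rewrite hpa ha.
have [s [ps ls als]] := IH (par a) e1.
exists (par a :: s); split => /=.
- by rewrite /tpar hp eqxx ps.
- by rewrite ls (rt_eq pa).
- rewrite hpa ha ltnSn eqxx /=; apply/allP => v vs.
  move/allP: als => /(_ v vs) /andP [hv _].
  by rewrite (ltn_trans hv (ltnSn _)) /= ltnS (leq_trans hv) ?orbT // e1.
Qed.

Lemma tpar_eW u v : tpar u v -> eW u v.
Proof. by case/andP => hp /eqP ->; case: (par_spec hp). Qed.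

Lemma pathW_all (R : rel T) (P : pred T) a s :
  (forall u v, R u v -> P v) -> path R a s -> all P s.
Proof.
move=> RP; elim: s a => //= b s IH a /andP [ab ps].
by rewrite (RP _ _ ab) (IH b ps).
Qed.

Definition tedge u v := tpar u v || tpar v u.

Lemma key y x z : y \in W -> x \in W -> z \in W -> e y x -> e y z -> x != z ->
  ~~ ((0 < h x)%N && (par x == y)) -> ~~ ((0 < h z)%N && (par z == y)) ->
  ~~ tedge x z -> A_event e (W :\ y) x z.
Proof.
move=> yW xW zW yx yz xz ncx ncz nt.
have eyx : eW y x by rewrite /eW yx yW xW.
have eyz : eW y z by rewrite /eW yz yW zW.
have hx := h_step eyx; have hz := h_step eyz.
pose R : rel T := fun u v => [&& eW u v, u != y, v != y & tedge u v].
have Rsym : symmetric R.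
  by move=> u v; rewrite /R eW_sym /tedge orbC; case: (u != y); case: (v != y); rewrite ?andbF.
have walk : forall a, e y a -> a \in W -> ~~ ((0 < h a)%N && (par a == y)) ->
   (h a <= (h y).+1)%N -> exists s, path R a s /\ last a s = rt y.
  move=> a ya aW nca ha.
  have eya : eW y a by rewrite /eW ya yW aW.
  have [s [ps ls als]] := up_ex a.
  exists s; split; last by rewrite ls (rt_eq eya).
  apply: (@sub_in_path _ (fun v => v != y) tpar) => //.
    move=> u v uy vy tuv; move: uy vy; rewrite /in_mem /= => uy vy; rewrite /R uy vy tpar_eW //= /tedge tuv //.
  rewrite /= (_ : a != y) /=; last by apply/eqP => ay; move: ya; rewrite ay eirr.
  apply/allP => v vs; move/allP: als => /(_ v vs) /andP [hva].
  case/orP => [/eqP vp | hv].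
    by apply: contra nca => /eqP vy; rewrite -vp vy eqxx andbT (leq_ltn_trans (leq0n _) hva).
  apply/eqP => vy; subst v.
  by move: (leq_trans hv ha); rewrite ltnS ltnn.
have [sx [px lx]] := walk x yx xW ncx hx.
have [sz [pz lz]] := walk z yz zW ncz hz.
have [s [ps ls]] := join_walk Rsym px pz (etrans lx (sym_equal lz)).
have [s' [ps' us' ls' _]] := short_path ps.
rewrite ls in ls'.
have allR : all (fun v => (v \in W) && (v != y)) s'.
  apply: (pathW_all (R := R) (a := x)) => //.
  by move=> u v /and4P [/and3P [_ _ ->] _ -> _].
exists s'; split => //.
- case: s' ps' us' ls' allR => [|c [|d s']] //=.
    by move=> _ _ xz'; rewrite xz' eqxx in xz.
  rewrite andbT => /and4P [_ _ _ tc] _ cz _; subst c.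
  by rewrite tc in nt.
- by apply: (sub_path _ ps') => u v /and4P [/and3P [] ].
- apply/allP => v /mem_take vs; move/allP: allR => /(_ v vs).
  by rewrite in_setD1 andbC.
Qed.


Definition child y x := [&& x \in W, (0 < h x)%N & par x == y].
Definition Aev U a b := `[< A_event e U a b >].
Definition charge y x := [&& y \in W, x \in W, (0 < h x)%N,
  e y x, e y (par x), par x != y &
  ~~ (Aev (W :\ y) x (par x) && Aev (W :\ y) (par x) x)].

Lemma charge_uniq y y' x : charge y x -> charge y' x -> y = y'.
Proof.
move=> /and4P [yW xW hx /and4P [yx ypx pxy nA]].
move=> /and4P [y'W _ _ /and4P [y'x y'px pxy' _]].
apply/eqP; apply: contraT => yy'.
have [exp _] := par_spec hx.
have ex : e x (par x) by case/and3P: exp.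
have xy' : x != y' by apply/eqP => E; move: y'x; rewrite E eirr.
have xpx : x != par x by apply/eqP => E; move: ex; rewrite -E eirr.
have y'W' : y' \in W :\ y by rewrite in_setD1 eq_sym yy' y'W.
move: nA; rewrite negb_and => /orP [] /asboolPn []; [exists [:: y'; par x] | exists [:: y'; x]];
  split => //=; rewrite ?y'W' ?andbT.
all: try done.
- by rewrite (esym x y') y'x y'px.
- by rewrite !inE negb_or xy' xpx eq_sym pxy'.
- by rewrite (esym (par x) y') y'px y'x.
- by rewrite !inE negb_or pxy' eq_sym xpx eq_sym xy'.
Qed.

Local Open Scope ring_scope.
Lemma sum3 (R : nmodType) (G : T * T * T -> R) :
  \sum_t G t = \sum_x \sum_y \sum_z G ((x, y), z).
Proof.
rewrite (pair_bigA _ (fun x y => \sum_z G ((x, y), z))) /=.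
rewrite (pair_bigA _ (fun p z => G ((p.1, p.2), z))) /=.
by apply: eq_bigr => [[[x y] z]].
Qed.

Definition sW y := #|[set v in W | e y v]|.

Section R.
Variable R : realType.

Definition Fc (t : T * T * T) : R :=
  (if [&& child t.1.2 t.1.1, t.2 \in W & e t.1.2 t.2] then (sW t.1.2)%:R^-1 else 0)
  + (if charge t.1.2 t.1.1 && (t.2 == par t.1.1) then 2^-1 else 0).

Lemma Fc_ge0 t : 0 <= Fc t.
Proof. by rewrite /Fc; apply: addr_ge0; case: ifP => // _; rewrite invr_ge0. Qed.

Definition swap (t : T * T * T) := ((t.2, t.1.2), t.1.1).

Lemma stepA x y z : path2 e x y z -> y \in W -> x \in W -> z \in W ->
  ~~ Aev (W :\ y) x z ->
  (deg e y)%:R^-1 <= Fc ((x, y), z) + Fc (swap ((x, y), z)).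
Proof.
move=> /and3P [xy yz xz] yW xW zW nA; rewrite /swap /Fc /=.
have yx : e y x by rewrite esym.
have sdeg : (sW y <= deg e y)%N.
  by apply: subset_leq_card; apply/subsetP => v; rewrite !inE => /andP [].
have s1 : (0 < sW y)%N.
  by rewrite /sW card_gt0; apply/set0Pn; exists x; rewrite !inE xW yx.
have d2 : (2 <= deg e y)%N.
  have c2 := cards2 x z; rewrite xz in c2; rewrite /deg -c2; apply: subset_leq_card; apply/subsetP => v.
  by rewrite !inE => /orP [] /eqP ->.
have i1 : (deg e y)%:R^-1 <= (sW y)%:R^-1 :> R.
  by rewrite lef_pV2 ?ler_nat // posrE ltr0n // (leq_trans s1 sdeg).
have i2 : (deg e y)%:R^-1 <= 2^-1 :> R.
  by rewrite lef_pV2 ?posrE ?ltr0n // ?(leq_trans _ d2) // ler_nat.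
have P1 := (if_same (A := R)).
have g0 : forall b (c : R), 0 <= c -> 0 <= (if b then c else 0).
  by move=> b c c0; case: b.
have s0 : 0 <= (sW y)%:R^-1 :> R by rewrite invr_ge0.
have h0' : 0 <= 2^-1 :> R by rewrite invr_ge0.
case cx: (child y x).
  rewrite zW yz /= -addrA; apply: (le_trans i1); rewrite lerDl.
  by rewrite ?addr_ge0 //; case: ifP.
case cz: (child y z).
  rewrite xW yx /= addrC -addrA; apply: (le_trans i1); rewrite lerDl.
  by rewrite ?addr_ge0 //; case: ifP.
have nc : forall a, a \in W -> child y a = false -> ~~ ((0 < h a)%N && (par a == y)).
  by move=> a aW; rewrite /child aW /= => ->.
case tx: (tpar x z).
  move: tx => /andP [hx /eqP zp].
  have chx : charge y x.
    have zy : z != y by move: cx; rewrite /child xW hx -zp /= => ->.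
    by rewrite /charge yW xW hx yx -zp yz zy /= negb_and nA.
  rewrite chx zp eqxx /= add0r.
  apply: (le_trans i2); rewrite lerDl.
  by rewrite ?addr_ge0 //; case: ifP.
case tz: (tpar z x).
  move: tz => /andP [hz /eqP xp].
  have chz : charge y z.
    have xy' : x != y by move: cz; rewrite /child zW hz -xp /= => ->.
    by rewrite /charge yW zW hz yz -xp yx xy' /= negb_and nA orbT.
  rewrite chz xp eqxx /= !add0r addrC.
  apply: (le_trans i2); rewrite lerDl.
  by rewrite ?addr_ge0 //; case: ifP.
have := key yW xW zW yx yz xz (nc x xW cx) (nc z zW cz).
by rewrite /tedge tx tz /= => /(_ isT) H; move: nA; rewrite /Aev; move/asboolPn.
Qed.


Lemma swap_inj : injective swap.
Proof. by move=> [[a b] c] [[a' b'] c'] /= [-> -> ->]. Qed.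

Lemma child_sum x : \sum_y (if child y x then 1 else 0 : R) <= (if x \in W then 1 else 0).
Proof.
rewrite (bigD1 (par x)) //= big1 => [|y ny]; last first.
  by rewrite /child eq_sym (negbTE ny) !andbF.
rewrite addr0 /child eqxx andbT; case: (x \in W) => //=; case: ifP => //.
Qed.

Lemma charge_sum x : \sum_y (if charge y x then 2^-1 else 0 : R) <= (if x \in W then 2^-1 else 0).
Proof.
case: (pickP (fun y => charge y x)) => [y0 c0 | none]; last first.
  by rewrite big1 => [|y _]; [case: ifP; rewrite // invr_ge0 | rewrite none].
rewrite (bigD1 y0) //= big1 => [|y ny]; last first.
  by case: ifP => // cy; move: ny; rewrite (charge_uniq cy c0) eqxx.
by rewrite c0 addr0; case/and3P: c0 => _ ->.
Qed.

Lemma DL : \sum_(t | path2 e t.1.1 t.1.2 t.2 && (enum_rank t.1.1 < enum_rank t.2)%N)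
   ((deg e t.1.2)%:R^-1 * (if [&& t.1.2 \in W, t.1.1 \in W, t.2 \in W &
        ~~ Aev (W :\ t.1.2) t.1.1 t.2] then 1 else 0) : R)
   <= 3 / 2 * #|W|%:R.
Proof.
set Q := fun t : T * T * T => path2 e t.1.1 t.1.2 t.2 && (enum_rank t.1.1 < enum_rank t.2)%N.
apply: (le_trans (y := \sum_(t | Q t) (Fc t + Fc (swap t)))).
  apply: ler_sum => [[[x y] z]] /andP [pt _] /=.
  case: ifP => [/and4P [yW xW zW nA]|_].
    by rewrite mulr1; apply: stepA.
  by rewrite mulr0; apply: addr_ge0; apply: Fc_ge0.
rewrite big_split /=.
have -> : \sum_(t | Q t) Fc (swap t) = \sum_(t | Q (swap t)) Fc t.
  rewrite [RHS](reindex_inj swap_inj).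
  by apply: eq_big => [[[x y] z]|[[x y] z] _].
apply: (le_trans (y := \sum_t Fc t)).
  rewrite [X in X + _]big_mkcond [X in _ + X]big_mkcond -big_split /=.
  apply: ler_sum => [[[x y] z]] _; rewrite /Q /=.
  have [lt|ge] := ltnP (enum_rank x) (enum_rank z).
    by rewrite ltnNge (ltnW lt) andbF addr0; case: ifP => // _; apply: Fc_ge0.
  by rewrite andbF add0r; case: ifP => // _; apply: Fc_ge0.
rewrite /Fc big_split /=.
have c1 : \sum_(t : T * T * T) (if [&& child t.1.2 t.1.1, t.2 \in W & e t.1.2 t.2]
      then (sW t.1.2)%:R^-1 else 0 : R) <= #|W|%:R.
  rewrite sum3 /=.
  apply: (le_trans (y := \sum_x (if x \in W then 1 else 0 : R))); last first.
    by rewrite -big_mkcond sumr_const.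
  apply: ler_sum => x _; apply: le_trans (child_sum x).
  apply: ler_sum => y _.
  case cyx: (child y x) => /=; last by rewrite big1.
  rewrite -big_mkcond /=.
  have -> : \sum_(z | (z \in W) && e y z) (sW y)%:R^-1 = \sum_(z in [set v in W | e y v]) (sW y)%:R^-1 :> R.
    by apply: eq_bigl => z; rewrite !inE.
  rewrite sumr_const -/(sW y).
  have sp : (sW y)%:R != 0 :> R; last by rewrite -[_ *+ _]mulr_natr mulVf.
  move: cyx; rewrite /child => /and3P [xW hx /eqP px].
  have [exp _] := par_spec hx; move: exp; rewrite /eW px => /and3P [xy _ _].
  rewrite pnatr_eq0 -lt0n /sW card_gt0; apply/set0Pn; exists x.
  by rewrite !inE xW esym xy.
have c2 : \sum_(t : T * T * T) (if charge t.1.2 t.1.1 && (t.2 == par t.1.1)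
      then 2^-1 else 0 : R) <= 2^-1 * #|W|%:R.
  rewrite sum3 /=.
  apply: (le_trans (y := \sum_x (if x \in W then 2^-1 else 0 : R))); last first.
    by rewrite -big_mkcond sumr_const mulr_natr.
  apply: ler_sum => x _; apply: le_trans (charge_sum x).
  apply: ler_sum => y _.
  case: (charge y x) => /=; last by rewrite big1.
  by rewrite -big_mkcond big_pred1_eq.
apply: le_trans (lerD c1 c2) _.
rewrite -{1}(mul1r (#|W|%:R)) -mulrDl; apply: ler_wpM2r => //.
lra.
Qed.

End R.
End BFS.
Local Open Scope ring_scope.
Section Prob.
Variables (R : realType) (T : finType) (p : R).
Hypothesis p0 : 0 < p.
Hypothesis p1 : p < 1.

Definition mu (W : {set T}) : R := p ^+ #|W| * (1 - p) ^+ (#|T| - #|W|).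

Lemma mu_ge0 (W : {set T}) : 0 <= mu W.
Proof. rewrite /mu mulr_ge0 // exprn_ge0 //; first [exact: ltW p0 | by rewrite subr_ge0 ltW]. Qed.

Lemma card_lt_notin (v : T) (W : {set T}) : v \notin W -> (#|W| < #|T|)%N.
Proof.
move=> vW; rewrite -cardsT; apply: proper_card; rewrite properT.
by apply: contraNneq vW => ->; rewrite inE.
Qed.

Lemma mu_U1 (v : T) (W : {set T}) : v \notin W -> (1 - p) * mu (v |: W) = p * mu W.
Proof.
move=> vW; have lt := card_lt_notin vW.
rewrite /mu cardsU1 vW add1n.
have -> : (#|T| - #|W| = (#|T| - #|W|.+1).+1)%N by rewrite subnSK.
by rewrite !exprS; ring.
Qed.

Lemma sum_mu : \sum_W mu W = 1.
Proof.
rewrite /mu (partition_big (fun W : {set T} => (inord #|W| : 'I_#|T|.+1)) xpredT) //=.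
transitivity ((1 - p + p) ^+ #|T|); last by rewrite subrK expr1n.
rewrite exprDn; apply: eq_bigr => k _.
rewrite (eq_bigl (fun W : {set T} => #|W| == k)); last first.
  move=> W /=; apply/eqP/eqP => [E|E].
    by rewrite -E inordK // ltnS max_card.
  by apply/val_inj; rewrite /= E inordK // ltn_ord.
rewrite (eq_bigr (fun _ => p ^+ k * (1 - p) ^+ (#|T| - k))); last by move=> W /eqP ->.
rewrite sumr_const.
have -> : #|[pred W : {set T} | #|W| == k]| = 'C(#|T|, k).
  by rewrite -card_draws; apply: eq_card => W; rewrite inE.
by rewrite mulrC.
Qed.

Lemma L2 (v : T) (f : {set T} -> R) : (forall W, f (W :\ v) = f W) ->
  \sum_W mu W * ((if v \in W then 1 else 0) * f W) = p * \sum_W mu W * f W.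
Proof.
move=> fv.
rewrite (bigID (fun W : {set T} => v \in W)) /= [X in _ = p * X](bigID (fun W : {set T} => v \in W)) /=.
rewrite [X in _ + X]big1 => [|W /negbTE ->]; last by rewrite mul0r mulr0.
rewrite addr0.
under eq_bigr => W -> do rewrite mul1r.
set a := \sum_(W : {set T} | v \in W) _.
set b := \sum_(W : {set T} | v \notin W) _.
suff : (1 - p) * a = p * b by move=> H; lra.
rewrite /a (reindex_onto (fun W => v |: W) (fun W => W :\ v)) /=; last first.
  by move=> W vW; rewrite setD1K.
rewrite (eq_bigl (fun W : {set T} => v \notin W)); last first.
  move=> W; rewrite setU11 /=; case vW: (v \in W) => /=.
    by apply/eqP => E; move: vW; rewrite -E !inE eqxx.
  by rewrite setU1K ?vW ?eqxx.
rewrite /b !mulr_sumr; apply: eq_bigr => W vW.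
have fW : f (v |: W) = f W by rewrite -(fv (v |: W)) setU1K.
by rewrite fW [LHS]mulrA mu_U1 // mulrA.
Qed.

Lemma L3 (y : T) (g : {set T} -> R) :
  \sum_(U : {set T} | y \notin U) (p ^+ #|U| * (1 - p) ^+ (#|T| - 1 - #|U|) * g U)
  = \sum_W mu W * g (W :\ y).
Proof.
have q0 : 1 - p != 0 by rewrite subr_eq0 eq_sym lt_eqF.
apply: (mulfI q0).
set L := \sum_(U | _) _.
set Rr := \sum_W _.
have E1 : Rr = p * Rr + \sum_(W : {set T} | y \notin W) mu W * g W.
  rewrite {1}/Rr (bigID (fun W : {set T} => y \in W)) /=.
  congr (_ + _); last by apply: eq_bigr => W yW; congr (_ * g _); apply/setP => v; rewrite !inE; case: eqP => // ->; rewrite (negbTE yW).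
  rewrite /Rr -(L2 (v := y) (f := fun W => g (W :\ y))); last by move=> W; congr g; apply/setP => v; rewrite !inE andbA andbb.
  rewrite [RHS](bigID (fun W : {set T} => y \in W)) /= [X in _ = _ + X]big1 ?addr0 => [|W /negbTE ->]; last by rewrite mul0r mulr0.
  by apply: eq_bigr => W ->; rewrite mul1r.
have E2 : (1 - p) * L = \sum_(W : {set T} | y \notin W) mu W * g W.
  rewrite /L mulr_sumr; apply: eq_bigr => U yU.
  have lt := card_lt_notin yU.
  rewrite /mu mulrA; congr (_ * _).
  have -> : (#|T| - #|U| = (#|T| - 1 - #|U|).+1)%N.
    by rewrite -subnDA add1n subnSK.
  by rewrite exprS; ring.
rewrite E2; lra.
Qed.

End Prob.
Lemma A_indep (T : finType) (e : rel T) (U U' : {set T}) x z :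
  (forall v, v != x -> v != z -> (v \in U) = (v \in U')) ->
  A_event e U x z -> A_event e U' x z.
Proof.
move=> H [s [sz ps ls us al]]; exists s; split => //.
move: sz ps ls us al; case/lastP: s => [//|s c] _ _.
rewrite last_rcons => cz; subst c.
rewrite size_rcons /= -cats1 take_size_cat // => us al.
have us' := us; rewrite cats1 /= rcons_uniq in us'.
case/andP: us' => xs /andP [zs _].
apply/allP => v vs; rewrite -H; first by move/allP: al => /(_ v vs).
  by apply: contraNneq xs => <-; rewrite mem_rcons inE vs orbT.
by apply: contraNneq zs => <-.
Qed.

Lemma Aev_indep (T : finType) (e : rel T) (U U' : {set T}) x z :
  (forall v, v != x -> v != z -> (v \in U) = (v \in U')) ->
  Aev e U x z = Aev e U' x z.
Proof.
move=> H; apply/asboolP/asboolP; apply: A_indep => // v vx vz; exact/esym/H.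
Qed.

Theorem lemma3p4 (R : realType) (T : finType) (e : rel T) (p eps : R) :
  simple_graph e -> (0 < #|T|)%N -> 0 < p < 1 -> 0 < eps < 1 ->
  nonadm_sum e p eps < 3 * (#|T|)%:R / (2 * p ^+ 2 * eps).
Proof.
move=> [esy eir] n0 /andP [p0 p1] /andP [e0 e1].
pose ind (W : {set T}) (t : T * T * T) : R := if [&& t.1.2 \in W, t.1.1 \in W, t.2 \in W &
        ~~ Aev e (W :\ t.1.2) t.1.1 t.2] then 1 else 0.
have mu0 : forall W : {set T}, 0 <= mu p W.
  exact: (mu_ge0 p0 p1).
have ident : forall x y z, path2 e x y z ->
    p ^+ 3 * (1 - prob_A e p x y z) = \sum_W mu p W * ind W ((x, y), z).
  move=> x y z /and3P [xy yz xz].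
  have xy' : x != y by apply: contraTneq xy => ->; rewrite eir.
  have zy' : z != y by apply: contraTneq yz => ->; rewrite eir.
  pose g0 (W : {set T}) : R := if ~~ Aev e (W :\ y) x z then 1 else 0.
  have E1 : 1 - prob_A e p x y z = \sum_W mu p W * g0 W.
    rewrite /prob_A (L3 p1 y (fun U => if `[< A_event e U x z >] then 1 else 0)).
    rewrite -{1}(sum_mu T p) -sumrB; apply: eq_bigr => W _.
    by rewrite /g0 /Aev; case: (`[< A_event e (W :\ y) x z >]) => /=; rewrite ?mulr1 ?mulr0 ?subrr ?subr0.
  rewrite E1.
  have g0x : forall W, g0 (W :\ x) = g0 W.
    move=> W; rewrite /g0 (@Aev_indep _ _ ((W :\ x) :\ y) (W :\ y)) //.
    by move=> v vx _; rewrite !inE vx.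
  have g0z : forall W, g0 (W :\ z) = g0 W.
    move=> W; rewrite /g0 (@Aev_indep _ _ ((W :\ z) :\ y) (W :\ y)) //.
    by move=> v _ vz; rewrite !inE vz.
  have g0y : forall W, g0 (W :\ y) = g0 W.
    by move=> W; rewrite /g0 (_ : (W :\ y) :\ y = W :\ y) //; apply/setP => v; rewrite !inE andbA andbb.
  have -> : \sum_W mu p W * ind W ((x, y), z) = \sum_W mu p W *
      ((if y \in W then 1 else 0) * ((if x \in W then 1 else 0) * ((if z \in W then 1 else 0) * g0 W))).
    apply: eq_bigr => W _; rewrite /ind /g0 /=.
    by case: (y \in W); case: (x \in W); case: (z \in W); rewrite /= ?mul1r ?mul0r.
  rewrite L2 //; last first.
    by move=> W; rewrite g0y !inE xy' zy'.
  rewrite L2 //; last first.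
    by move=> W; rewrite g0x !inE eq_sym xz.
  rewrite L2 //.
  by rewrite !exprS expr0 mulr1 !mulrA.
have p3 : 0 < p ^+ 3 by rewrite exprn_gt0.
have Pge : forall x y z, path2 e x y z -> 0 <= 1 - prob_A e p x y z.
  move=> x y z pt; rewrite -(pmulr_rge0 _ p3) ident //.
  apply: sumr_ge0 => W _; apply: mulr_ge0 => //; rewrite /ind; case: ifP => //.
set P := fun t : T * T * T => path2 e t.1.1 t.1.2 t.2 && (enum_rank t.1.1 < enum_rank t.2)%N.
have Qb : \sum_(t | P t) (deg e t.1.2)%:R^-1 * (1 - prob_A e p t.1.1 t.1.2 t.2)
    <= 3 * #|T|%:R / (2 * p ^+ 2).
  have -> : \sum_(t | P t) (deg e t.1.2)%:R^-1 * (1 - prob_A e p t.1.1 t.1.2 t.2)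
      = (p ^+ 3)^-1 * \sum_W mu p W * \sum_(t | P t) (deg e t.1.2)%:R^-1 * ind W t.
    rewrite [RHS]mulr_sumr.
    under [RHS]eq_bigr => W _ do rewrite !mulr_sumr.
    rewrite [RHS]exchange_big /=; apply: eq_bigr => [[[x y] z]] /andP [pt _] /=.
    have p3n : p ^+ 3 != 0 by rewrite gt_eqF.
    rewrite -[1 - _](mulKf p3n) ident // !mulr_sumr; apply: eq_bigr => W _.
    by rewrite mulrCA; congr (_ * _); rewrite mulrCA.
  have cardE : forall W : {set T}, #|W|%:R = \sum_v (if v \in W then 1 else 0 : R).
    by move=> W; rewrite -big_mkcond sumr_const.
  have Emu : \sum_(W : {set T}) mu p W * (#|W|%:R : R) = p * #|T|%:R.
    under eq_bigr => W _ do rewrite cardE mulr_sumr.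
    rewrite exchange_big /=.
    transitivity (\sum_(v : T) p); last by rewrite sumr_const mulr_natr.
    apply: eq_bigr => v _.
    under eq_bigr => W _ do rewrite -[if _ then _ else _]mulr1.
    rewrite L2 //.
    by under eq_bigr => W _ do rewrite mulr1; rewrite sum_mu mulr1.
  apply: (le_trans (y := (p ^+ 3)^-1 * \sum_W mu p W * (3 / 2 * #|W|%:R))).
    apply: ler_wpM2l; first by rewrite invr_ge0 ltW.
    apply: ler_sum => W _; apply: ler_wpM2l => //.
    exact: (DL W esy eir R).
  under eq_bigr => W _ do rewrite mulrCA.
  rewrite -mulr_sumr Emu.
  rewrite le_eqVlt; apply/orP; left; apply/eqP; field.
  by rewrite gt_eqF.
rewrite /nonadm_sum.
case: (pickP (fun t : T * T * T => [&& path2 e t.1.1 t.1.2 t.2,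
   (enum_rank t.1.1 < enum_rank t.2)%N & ~~ `[< admissible e p eps t.1.1 t.1.2 t.2 >]]))
   => [t0 Ht0 | none]; last first.
  rewrite big_pred0 //; apply: divr_gt0; first by rewrite mulr_gt0 // ltr0n.
  by rewrite !mulr_gt0 // exprn_gt0.
apply: (lt_le_trans (y := \sum_(t | [&& path2 e t.1.1 t.1.2 t.2,
   (enum_rank t.1.1 < enum_rank t.2)%N & ~~ `[< admissible e p eps t.1.1 t.1.2 t.2 >]])
   eps^-1 * ((deg e t.1.2)%:R^-1 * (1 - prob_A e p t.1.1 t.1.2 t.2)))).
  apply: ltr_sum; first by apply/hasP; exists t0 => //; rewrite mem_index_enum.
  move=> [[x y] z] /and3P [pt _ na] /=.
  have dpos : 0 < (deg e y)%:R^-1 :> R.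
    rewrite invr_gt0 ltr0n /deg card_gt0; apply/set0Pn; exists z; rewrite inE.
    by case/and3P: pt.
  have lt : prob_A e p x y z < 1 - eps.
    move: na => /asboolPn; rewrite /admissible => H; rewrite ltNge; apply/negP => H'; exact: H H'.
  rewrite mulrCA ltr_pMr // ltr_pdivlMl // mulr1; lra.
apply: (le_trans (y := eps^-1 * \sum_(t | P t) (deg e t.1.2)%:R^-1 * (1 - prob_A e p t.1.1 t.1.2 t.2))).
  rewrite mulr_sumr [X in _ <= X]big_mkcond [X in X <= _]big_mkcond; apply: ler_sum => t _.
  case: t => [[x y] z] /=; rewrite /P /=.
  case pt: (path2 e x y z); case rk: (enum_rank x < enum_rank z)%N => //=; case: ifP => _ //.
  apply: mulr_ge0; first by rewrite invr_ge0 ltW.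
  by apply: mulr_ge0; [rewrite invr_ge0 | exact: Pge].
apply: le_trans (ler_wpM2l _ Qb) _; first by rewrite invr_ge0 ltW.
rewrite le_eqVlt; apply/orP; left; apply/eqP; field.
by rewrite !gt_eqF.
Qed.
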